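(* Under Assumption 1, for any samples $\theta_1,\dots,\theta_M\in\Theta$, the mapping $F$ is monotone on $\mathcal X\times\Delta_M$, i.e. $(u-v)^\top(F(u)-F(v))\ge0$ for all $u,v\in\mathcal X\times\Delta_M$.
   Context: Let $\mathcal N=\{1,\dots,N\}$; agent $i$ chooses $x_i\in\mathcal X_i\subset\mathbb R^n$, $x=(x_i)_{i}\in\mathcal X=\mathcal X_1\times\cdots\times\mathcal X_N\subset\mathbb R^{nN}$, $x_{-i}=(x_j)_{j\ne i}$. Let $\Theta$ be a set, $f_i:\mathbb R^{nN}\to\mathbb R$, $g:\mathbb R^{nN}\times\Theta\to\mathbb R$. Assumption 1: (i) for every $\theta\in\Theta$ and every $x_{-i}\in\prod_{j\ne i}\mathcal X_j$, $f_i(\cdot,x_{-i})+g(\cdot,x_{-i},\theta)$ is convex and continuously differentiable, and each $\mathcal X_i$ is nonempty, compact and convex; (ii) for every $\theta$ and $i$, $g(\cdot,\theta)$ and $f_i$ are twice differentiable on an open convex set containing $\mathcal X$; (iii) there are $\chi^f,\chi^g\in\mathbb R$ with $\chi^f+\chi^g\ge0$ such that for all $u,v\in\mathbb R^{nN}$ and $\theta\in\Theta$: $(u-v)^\top\big((\nabla_{u_i}f_i(u))_{i}-(\nabla_{v_i}f_i(v))_{i}\big)\ge\chi^f\|u-v\|^2$ and $(u-v)^\top(\nabla_u g(u,\theta)-\nabla_v g(v,\theta))\ge\chi^g\|u-v\|^2$. Given samples $\theta_1,\dots,\theta_M$: $\Delta_M=\{y\in\mathbb R^M: y\ge0,\ \sum_m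 y_m=1\}$, $\hat g(x,y)=\sum_{m=1}^M y_m g(x,\theta_m)$, and $F(x,y)=\big((\nabla_{x_i}f_i(x)+\nabla_{x_i}\hat g(x,y))_{i\in\mathcal N},\ -(\nabla_{y_m}\hat g(x,y))_{m=1}^M\big)\in\mathbb R^{nN+M}$. *)

(* Defs.v *)
From mathcomp Require Import ssreflect ssrfun ssrbool eqtype ssrnat seq choice fintype.
From Stdlib Require Import Reals.
Set Implicit Arguments.
Unset Strict Implicit.
Open Scope R_scope.

Definition sumF (I : finType) (h : I -> R) : R :=
  foldr Rplus 0 (map h (enum I)).

Definition dotF (I : finType) (u v : I -> R) : R := sumF (fun j => u j * v j).
Definition nrm2F (I : finType) (u : I -> R) : R := dotF u u.
Definition normF (I : finType) (u : I -> R) : R := sqrt (nrm2F u).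
Definition subF (I : finType) (u v : I -> R) : I -> R := fun j => u j - v j.

Definition has_grad (I : finType) (h : (I -> R) -> R) (x G : I -> R) : Prop :=
  forall eps, 0 < eps -> exists delta, 0 < delta /\
    forall y, normF (subF y x) < delta ->
      Rabs (h y - h x - dotF G (subF y x)) <= eps * normF (subF y x).

Definition cont_map_at (I J : finType) (G : (I -> R) -> (J -> R)) (x : I -> R) : Prop :=
  forall eps, 0 < eps -> exists delta, 0 < delta /\
    forall y, normF (subF y x) < delta -> normF (subF (G y) (G x)) < eps.

Definition C1 (I : finType) (h : (I -> R) -> R) : Prop :=
  exists G : (I -> R) -> (I -> R),
    (forall x, has_grad h x (G x)) /\ (forall x, cont_map_at G x).

Definition twice_diff_on (I : finType) (U : (I -> R) -> Prop) (h : (I -> R) -> R) : Prop :=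
  exists G : (I -> R) -> (I -> R),
    (forall x, U x -> has_grad h x (G x)) /\
    (forall x, U x -> forall j : I, exists H, has_grad (fun y => G y j) x H).

Definition convex_set (I : finType) (S : (I -> R) -> Prop) : Prop :=
  forall x y t, S x -> S y -> 0 <= t <= 1 -> S (fun j => t * x j + (1 - t) * y j).

Definition convex_fun (I : finType) (h : (I -> R) -> R) : Prop :=
  forall x y t, 0 <= t <= 1 ->
    h (fun j => t * x j + (1 - t) * y j) <= t * h x + (1 - t) * h y.

Definition open_set (I : finType) (U : (I -> R) -> Prop) : Prop :=
  forall x, U x -> exists r, 0 < r /\ forall y, normF (subF y x) < r -> U y.

(* Compactness in R^I (sequential compactness, equivalent to closed+bounded). *)
Definition compact_set (I : finType) (S : (I -> R) -> Prop) : Prop :=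
  forall u : nat -> (I -> R), (forall k, S (u k)) ->
    exists (phi : nat -> nat) (l : I -> R),
      (forall k, ltn (phi k) (phi k.+1)) /\ S l /\
      Un_cv (fun k => normF (subF (u (phi k)) l)) 0.

Definition nonempty_set (I : finType) (S : (I -> R) -> Prop) : Prop := exists x, S x.

(* Joint action profiles x in R^{nN}, indexed by (agent i, coordinate k). *)
Notation prof N n := (('I_N * 'I_n)%type -> R).

Definition block (N n : nat) (x : prof N n) (i : 'I_N) : 'I_n -> R :=
  fun k => x (i, k).

(* upd x i z = (z, x_{-i}) *)
Definition upd (N n : nat) (x : prof N n) (i : 'I_N) (z : 'I_n -> R) : prof N n :=
  fun p => if p.1 == i then z p.2 else x p.

Definition in_prod (N n : nat) (Xs : 'I_N -> ('I_n -> R) -> Prop) (x : prof N n) : Prop :=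
  forall i, Xs i (block x i).

Definition simplex (M : nat) (y : 'I_M -> R) : Prop :=
  (forall m, 0 <= y m) /\ sumF y = 1.

(* Assumption 1.  pf i x stands for nabla_{x_i} f_i(x) and dg x th for
   nabla_x g(x, th); they are tied to f, g by the hypotheses below. *)
Definition Assumption1 (N n : nat) (Th : Type)
  (Xs : 'I_N -> ('I_n -> R) -> Prop)
  (f : 'I_N -> prof N n -> R) (g : prof N n -> Th -> R)
  (pf : 'I_N -> prof N n -> ('I_n -> R)) (dg : prof N n -> Th -> prof N n) : Prop :=
  (forall i, nonempty_set (Xs i) /\ compact_set (Xs i) /\ convex_set (Xs i)) /\
  (forall (th : Th) (i : 'I_N) (x : prof N n),
     (forall j, j != i -> Xs j (block x j)) ->
     convex_fun (fun z => f i (upd x i z) + g (upd x i z) th) /\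
     C1 (fun z => f i (upd x i z) + g (upd x i z) th)) /\
  (forall (th : Th) (i : 'I_N), exists U : prof N n -> Prop,
     open_set U /\ convex_set U /\ (forall x, in_prod Xs x -> U x) /\
     twice_diff_on U (fun x => g x th) /\ twice_diff_on U (f i)) /\
  (exists chif chig : R, chif + chig >= 0 /\
     (forall u v : prof N n,
        dotF (subF u v) (subF (fun p => pf p.1 u p.2) (fun p => pf p.1 v p.2))
          >= chif * nrm2F (subF u v)) /\
     (forall (th : Th) (u v : prof N n),
        dotF (subF u v) (subF (dg u th) (dg v th)) >= chig * nrm2F (subF u v))).

(* The mapping F(x, y), split into its x-block and its y-block. *)
Definition Fx (N n M : nat) (Th : Type) (thetas : 'I_M -> Th)
  (pf : 'I_N -> prof N n -> ('I_n -> R)) (dg : prof N n -> Th -> prof N n)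
  (x : prof N n) (y : 'I_M -> R) : prof N n :=
  fun p => pf p.1 x p.2 + sumF (fun m => y m * dg x (thetas m) p).

Definition Fy (N n M : nat) (Th : Type) (thetas : 'I_M -> Th)
  (g : prof N n -> Th -> R) (x : prof N n) (y : 'I_M -> R) : 'I_M -> R :=
  fun m => - g x (thetas m).

(* Main.v *)
Require Import Defs.
From mathcomp Require Import ssreflect ssrfun ssrbool eqtype ssrnat seq choice fintype.
From Stdlib Require Import Reals Lra FunctionalExtensionality.
Set Implicit Arguments.
Unset Strict Implicit.
Open Scope R_scope.

Section S.
Variable I : finType.
Lemma sumF_add (h1 h2 : I -> R) : sumF (fun j => h1 j + h2 j) = sumF h1 + sumF h2.
Proof. rewrite /sumF; elim: (enum I) => /= [|a s IH]; lra. Qed.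
Lemma sumF_sub (h1 h2 : I -> R) : sumF (fun j => h1 j - h2 j) = sumF h1 - sumF h2.
Proof. rewrite /sumF; elim: (enum I) => /= [|a s IH]; lra. Qed.
Lemma sumF_scal c (h : I -> R) : sumF (fun j => c * h j) = c * sumF h.
Proof. rewrite /sumF; elim: (enum I) => /= [|a s IH]; nra. Qed.
Lemma sumF_ext (h1 h2 : I -> R) : (forall j, h1 j = h2 j) -> sumF h1 = sumF h2.
Proof. by move=> H; rewrite (functional_extensionality _ _ H). Qed.
Lemma sumF_le (h1 h2 : I -> R) : (forall j, h1 j <= h2 j) -> sumF h1 <= sumF h2.
Proof. move=> H; rewrite /sumF; elim: (enum I) => /= [|a s IH]; [lra|]. have := H a; lra. Qed.
Lemma sumF0 : sumF (fun _ : I => 0) = 0.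
Proof. rewrite /sumF; elim: (enum I) => /= [|a s IH]; lra. Qed.
Lemma nrm2F_ge0 (u : I -> R) : 0 <= nrm2F u.
Proof. rewrite -sumF0 /nrm2F /dotF; apply: sumF_le => j; nra. Qed.
End S.

Lemma sumF_swap (I J : finType) (h : I -> J -> R) :
  sumF (fun i => sumF (fun j => h i j)) = sumF (fun j => sumF (fun i => h i j)).
Proof.
have gen : forall s : seq I, foldr Rplus 0 (map (fun i => sumF (fun j => h i j)) s)
   = sumF (fun j => foldr Rplus 0 (map (fun i => h i j) s)).
  elim => /= [|a s IH]; first by rewrite sumF0.
  by rewrite IH -sumF_add.
exact: gen.
Qed.

Lemma nrm2F_scal (I : finType) c (w : I -> R) : nrm2F (fun j => c * w j) = c * c * nrm2F w.
Proof. rewrite /nrm2F /dotF -sumF_scal; apply: sumF_ext => j; ring. Qed.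

Lemma normF_scal (I : finType) c (w : I -> R) : normF (fun j => c * w j) = Rabs c * normF w.
Proof.
rewrite /normF nrm2F_scal sqrt_mult_alt; last nra.
by rewrite -sqrt_Rsqr_abs.
Qed.

Lemma normF_ge0 (I : finType) (w : I -> R) : 0 <= normF w.
Proof. apply: sqrt_pos. Qed.
Lemma dotF_comm (I : finType) (a b : I -> R) : dotF a b = dotF b a.
Proof. apply: sumF_ext => j; ring. Qed.
Lemma dotF_subr (I : finType) (a b c : I -> R) : dotF a (subF b c) = dotF a b - dotF a c.
Proof. rewrite /dotF -sumF_sub; apply: sumF_ext => j; rewrite /subF; ring. Qed.
Lemma dotF_scall (I : finType) k (a b : I -> R) : dotF (fun j => k * a j) b = k * dotF a b.
Proof. rewrite /dotF -sumF_scal; apply: sumF_ext => j; ring. Qed.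
Lemma dotF_scalr (I : finType) k (a b : I -> R) : dotF a (fun j => k * b j) = k * dotF a b.
Proof. rewrite /dotF -sumF_scal; apply: sumF_ext => j; ring. Qed.

Section Breg.
Variable I : finType.
Variable G : (I -> R) -> R.
Variable D : (I -> R) -> (I -> R).
Variable c : R.
Hypothesis HG : forall x, has_grad G x (D x).
Hypothesis Hm : forall u v, dotF (subF u v) (subF (D u) (D v)) >= c * nrm2F (subF u v).

Lemma line_deriv (u w : I -> R) t :
  derivable_pt_lim (fun t => G (fun j => u j + t * w j)) t
    (dotF (D (fun j => u j + t * w j)) w).
Proof.
set z := fun t j => u j + t * w j.
move=> eps Heps.
have nw0 := normF_ge0 w.
have Hep : 0 < eps / (normF w + 1) by apply: Rdiv_lt_0_compat; lra.
have [delta [Hd H]] := HG (z t) Hep.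
have Hdp : 0 < delta / (normF w + 1) by apply: Rdiv_lt_0_compat; lra.
exists (mkposreal _ Hdp) => h hne /= hlt.
have Esub : subF (z (t + h)) (z t) = fun j => h * w j.
  by apply: functional_extensionality => j; rewrite /subF /z; ring.
have habs : Rabs h * normF w < delta.
  have : Rabs h * (normF w + 1) < delta.
    have := Rmult_lt_compat_r (normF w + 1) _ _ ltac:(lra) hlt.
    by rewrite /Rdiv Rmult_assoc Rinv_l; [rewrite Rmult_1_r|lra].
  have := Rabs_pos h; nra.
have := H (z (t + h)).
rewrite Esub normF_scal dotF_scalr => /(_ habs) key.
have hpos : 0 < Rabs h by apply: Rabs_pos_lt.
set A := G (z (t + h)) - G (z t) in key *.

have -> : A / h - dotF (D (fun j => u j + t * w j)) w
          = (A - h * dotF (D (z t)) w) / h by rewrite /z; field.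
rewrite /Rdiv Rabs_mult Rabs_inv.
apply: (Rmult_lt_reg_r (Rabs h)) => //.
rewrite /Rdiv Rmult_assoc Rinv_l; last lra.
rewrite Rmult_1_r.
apply: (Rle_lt_trans _ _ _ key).
have : eps / (normF w + 1) * normF w < eps.
  apply: (Rmult_lt_reg_r (normF w + 1)); first lra.
  rewrite /Rdiv. have -> : eps * / (normF w + 1) * normF w * (normF w + 1)
     = eps * normF w * ((normF w + 1) * / (normF w + 1)) by ring.
  rewrite Rinv_r; lra.
nra.
Qed.

Lemma bregman u v :
  G v - G u - dotF (D u) (subF v u) >= c / 2 * nrm2F (subF v u).
Proof.
set w := subF v u.
set z := fun t j => u j + t * w j.
set l0 := dotF (D u) w. set n2 := nrm2F w.
set psi := fun t => G (z t) - (t * l0 + c / 2 * (t * t) * n2).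
set psi' := fun t => dotF (D (z t)) w - (l0 + c * t * n2).
have Hd : forall t, derivable_pt_lim psi t (psi' t).
  move=> t.
  have Hq : derivable_pt_lim (fun t => t * l0 + c / 2 * (t * t) * n2) t (l0 + c * t * n2).
    have E : (fun t => t * l0 + c / 2 * (t * t) * n2) =
      (mult_real_fct l0 id + mult_real_fct (c / 2 * n2) (id * id))%F.
      apply: functional_extensionality => s; rewrite /mult_real_fct /plus_fct /mult_fct /id; ring.
    rewrite E.
    have := derivable_pt_lim_plus _ _ t _ _
      (derivable_pt_lim_scal _ l0 t _ (derivable_pt_lim_id t))
      (derivable_pt_lim_scal _ (c / 2 * n2) t _
         (derivable_pt_lim_mult _ _ t _ _ (derivable_pt_lim_id t) (derivable_pt_lim_id t))).
    by rewrite /id; have -> : l0 * 1 + c / 2 * n2 * (1 * t + t * 1) = l0 + c * t * n2 by field.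
  have := derivable_pt_lim_minus _ _ t _ _ (line_deriv u w t) Hq.
  by rewrite /psi /psi' /z /minus_fct.
have [xi [Exi Hxi]] := MVT_cor2 psi psi' 0 1 Rlt_0_1 (fun c _ => Hd c).
have Hp : psi' xi >= 0.
  have := Hm (z xi) u.
  have -> : subF (z xi) u = fun j => xi * w j.
    by apply: functional_extensionality => j; rewrite /subF /z; ring.
  rewrite dotF_scall nrm2F_scal dotF_subr -/n2 => Hm'.
  have : dotF w (D (z xi)) - dotF w (D u) >= c * xi * n2.
    apply: Rle_ge; apply: (Rmult_le_reg_l xi); first lra. nra.
  rewrite /psi' /l0 (dotF_comm (D (z xi))) (dotF_comm (D u)); lra.
have E1 : z 1 = v by apply: functional_extensionality => j; rewrite /z /w /subF; ring.
have E0 : z 0 = u by apply: functional_extensionality => j; rewrite /z; ring.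
have : psi 1 - psi 0 >= 0 by rewrite Exi; nra.
rewrite /psi E1 E0 -/l0 -/n2 -/w. lra.
Qed.
End Breg.
Lemma dotF_flip (I : finType) (a u v : I -> R) : dotF a (subF v u) = - dotF (subF u v) a.
Proof.
rewrite /dotF. have -> : forall r, - r = -1 * r by move=> r; ring.
rewrite -sumF_scal; apply: sumF_ext => j; rewrite /subF; ring.
Qed.
Lemma nrm2F_flip (I : finType) (u v : I -> R) : nrm2F (subF v u) = nrm2F (subF u v).
Proof. apply: sumF_ext => j; rewrite /subF; ring. Qed.

Lemma alg1 dd a b s1 s2 : dd*((a+s1)-(b+s2)) = dd*(a-b) + dd*s1 - dd*s2.
Proof. ring. Qed.

Lemma alg2 ym ym' gx gx' D1 D2 :
  ym * (gx' - gx - - D1) + ym' * (gx - gx' - D2)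
  = ym * D1 - ym' * D2 + (ym - ym') * (- gx - - gx').
Proof. ring. Qed.

Theorem lemma1 (N n M : nat) (Th : Type)
  (Xs : 'I_N -> ('I_n -> R) -> Prop)
  (f : 'I_N -> prof N n -> R) (g : prof N n -> Th -> R)
  (pf : 'I_N -> prof N n -> ('I_n -> R)) (dg : prof N n -> Th -> prof N n)
  (Hpf : forall (i : 'I_N) (x : prof N n),
           has_grad (fun z => f i (upd x i z)) (block x i) (pf i x))
  (Hdg : forall (th : Th) (x : prof N n), has_grad (fun z => g z th) x (dg x th))
  (HA : Assumption1 Xs f g pf dg)
  (thetas : 'I_M -> Th) :
  forall (x : prof N n) (y : 'I_M -> R) (x' : prof N n) (y' : 'I_M -> R),
    in_prod Xs x -> simplex y -> in_prod Xs x' -> simplex y' ->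
    dotF (subF x x') (subF (Fx thetas pf dg x y) (Fx thetas pf dg x' y'))
    + dotF (subF y y') (subF (Fy thetas g x y) (Fy thetas g x' y')) >= 0.
Proof.
move=> x y x' y' _ [Hy0 Hy1] _ [Hy0' Hy1'].
case: HA => _ [_ [_ [chif [chig [Hc [Hf Hg]]]]]].
set d := subF x x'.
set nd := nrm2F d.
set A := fun m => g x' (thetas m) - g x (thetas m) - dotF (dg x (thetas m)) (subF x' x).
set B := fun m => g x (thetas m) - g x' (thetas m) - dotF (dg x' (thetas m)) (subF x x').
set T1 := dotF d (subF (fun p => pf p.1 x p.2) (fun p => pf p.1 x' p.2)).
have E : dotF d (subF (Fx thetas pf dg x y) (Fx thetas pf dg x' y'))
    + dotF (subF y y') (subF (Fy thetas g x y) (Fy thetas g x' y'))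
    = T1 + sumF (fun m => y m * A m + y' m * B m).
  have E1 : dotF d (subF (Fx thetas pf dg x y) (Fx thetas pf dg x' y'))
      = T1 + sumF (fun p => sumF (fun m => y m * (d p * dg x (thetas m) p)))
           - sumF (fun p => sumF (fun m => y' m * (d p * dg x' (thetas m) p))).
    have S1 : forall yy xx, sumF (fun p => sumF (fun m => yy m * (d p * dg xx (thetas m) p)))
        = sumF (fun p => d p * sumF (fun m => yy m * dg xx (thetas m) p)).
      move=> yy xx; apply: sumF_ext => p; rewrite -sumF_scal; apply: sumF_ext => m; ring.
    rewrite !S1 /T1 /dotF -sumF_add -sumF_sub; apply: sumF_ext => p.
    rewrite /subF /Fx; exact: alg1.
  rewrite E1.
  have S2 : forall yy xx, sumF (fun p => sumF (fun m => yy m * (d p * dg xx (thetas m) p)))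
        = sumF (fun m => yy m * dotF d (dg xx (thetas m))).
    move=> yy xx; rewrite sumF_swap; apply: sumF_ext => m; rewrite -sumF_scal; apply: sumF_ext => p; ring.
  rewrite !S2.
  have -> : sumF (fun m => y m * A m + y' m * B m) =
     sumF (fun m => y m * dotF d (dg x (thetas m))) - sumF (fun m => y' m * dotF d (dg x' (thetas m)))
     + dotF (subF y y') (subF (Fy thetas g x y) (Fy thetas g x' y')).
    rewrite /dotF -sumF_sub -sumF_add; apply: sumF_ext => m.
    rewrite /A /B (dotF_comm (dg x' (thetas m))) dotF_flip -/d /Fy /subF; exact: alg2.
  ring.
rewrite E.
have HT1 : T1 >= chif * nd by exact: Hf.
have HAm : forall m, A m >= chig / 2 * nd.
  move=> m; rewrite /nd /d -nrm2F_flip; exact: (bregman (Hdg (thetas m)) (Hg (thetas m)) x x').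
have HBm : forall m, B m >= chig / 2 * nd.
  move=> m; exact: (bregman (Hdg (thetas m)) (Hg (thetas m)) x' x).
have Hs : sumF (fun m => y m * A m + y' m * B m) >=
          sumF (fun m => chig / 2 * nd * y m + chig / 2 * nd * y' m).
  apply: Rle_ge; apply: sumF_le => m.
  have := HAm m; have := HBm m; have := Hy0 m; have := Hy0' m; nra.
rewrite (sumF_add (fun m => chig / 2 * nd * y m)) (sumF_scal _ y) (sumF_scal _ y') Hy1 Hy1' in Hs.
have := nrm2F_ge0 d; rewrite -/nd => Hnd.
nra.
Qed.
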